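(* Let $M_0>0$, $\varphi\in\mathrm{Lip}_\alpha$, $\tau_0\in C_+(\Omega)$ with $\|\varphi\|_{\mathrm{Lip}_\alpha}+\|\tau_0\|_\infty\le M_0$, and let $r\in(0,+\infty)$. Then system (1.1) with initial distribution $(\varphi,\tau_0)$ admits at most one solution $(A,\tau)\in C((-\infty,r],C(\Omega))\times C([0,r],C(\Omega))$ on $[0,r]$.
   Context: $\Omega\subset\mathbb R^n$ compact, $C(\Omega)$ with sup norm, $C_+(\Omega)$ nonnegative functions, $\alpha\ge0$ fixed. Standing assumption: $F:C(\Omega)\times C(\Omega)\times C(\Omega^2)\to C(\Omega)$ is Lipschitz on bounded sets (for every $M>0$ there is $L(M)$ with $\|F(u,v,w)-F(\hat u,\hat v,\hat w)\|_\infty\le L(M)[\|u-\hat u\|_\infty+\|v-\hat v\|_\infty+\|w-\hat w\|_\infty]$ when all arguments have norm $\le M$); $f:C(\Omega)\to C(\Omega)$ is Lipschitz, $0<f(\phi)(x)\le M_f$ for a constant $M_f$, and non-increasing for the pointwise order. $\mathrm{Lip}_\alpha$: $\phi\in C((-\infty,0],C(\Omega))$ with $\theta\mapsto e^{-\alpha|\theta|}\phi(\theta)$ bounded and Lipschitz, norm = sup norm + Lipschitz seminorm of that map. A solution of (1.1) on $[0,r]$ with initial distribution $(\varphi,\tau_0)$: continuous $A:(-\infty,r]\to C(\Omega)$, $\tau:[0,r]\to C_+(\Omega)$ with $A=\varphi$ on $(-\infty,0]$, $A(t,x)=\varphi(0,x)+\int_0^tF(A(l,\cdot),\tau(l,\cdot),A(l-\tau(l)))(x)dl$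 for $t\in[0,r]$, where $A(l-\tau(l))\in C(\Omega^2)$ is $(x,y)\mapsto A(l-\tau(l,x),y)$, and $\int_{t-\tau(t,x)}^tf(A(s,\cdot))(x)ds=\int_{-\tau_0(x)}^0f(\varphi(s,\cdot))(x)ds$ for $t\in[0,r]$, $x\in\Omega$. *)

(* Defs.v *)
From Stdlib Require Fin.
From Stdlib Require Export Reals Lra.
Open Scope R_scope.

Definition pt (n : nat) := Fin.t n -> R.

Definition subset (n : nat) := pt n -> Prop.

Definition pt_cv {n : nat} (u : nat -> pt n) (l : pt n) : Prop :=
  forall i : Fin.t n, Un_cv (fun k => u k i) (l i).

(* Compact subset of R^n (sequential compactness, equivalent to compactness
   in R^n): every sequence in Omega has a subsequence converging in Omega. *)
Definition compact_set {n : nat} (Omega : subset n) : Prop :=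
  forall u : nat -> pt n, (forall k, Omega (u k)) ->
  exists (phi : nat -> nat) (l : pt n),
    (forall k, (phi k < phi (S k))%nat) /\ Omega l /\ pt_cv (fun k => u (phi k)) l.

(* Distance check in R^n (max-norm ball; induces the usual topology). *)
Definition close {n : nat} (x y : pt n) (d : R) : Prop :=
  forall i : Fin.t n, Rabs (x i - y i) < d.

(* u belongs to C(Omega): continuous on Omega (values off Omega are irrelevant). *)
Definition Cfun {n : nat} (Omega : subset n) (u : pt n -> R) : Prop :=
  forall x, Omega x -> forall eps, 0 < eps -> exists delta, 0 < delta /\
    forall y, Omega y -> close x y delta -> Rabs (u y - u x) < eps.

Definition Cfun2 {n : nat} (Omega : subset n) (w : pt n -> pt n -> R) : Prop :=
  forall x y, Omega x -> Omega y -> forall eps, 0 < eps -> exists delta, 0 < delta /\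
    forall x' y', Omega x' -> Omega y' -> close x x' delta -> close y y' delta ->
      Rabs (w x' y' - w x y) < eps.

Definition Cplus {n : nat} (Omega : subset n) (u : pt n -> R) : Prop :=
  Cfun Omega u /\ forall x, Omega x -> 0 <= u x.

Definition nle {n : nat} (Omega : subset n) (u : pt n -> R) (a : R) : Prop :=
  forall x, Omega x -> Rabs (u x) <= a.

Definition nle2 {n : nat} (Omega : subset n) (w : pt n -> pt n -> R) (a : R) : Prop :=
  forall x y, Omega x -> Omega y -> Rabs (w x y) <= a.

Definition fsub {n : nat} (u v : pt n -> R) : pt n -> R := fun x => u x - v x.
Definition fsub2 {n : nat} (u v : pt n -> pt n -> R) : pt n -> pt n -> R :=
  fun x y => u x y - v x y.

Definition Fop (n : nat) :=
  (pt n -> R) -> (pt n -> R) -> (pt n -> pt n -> R) -> (pt n -> R).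

(* Standing assumption on F: maps C x C x C(Omega^2) into C(Omega) and is
   Lipschitz on bounded sets (norm inequalities written via upper bounds,
   i.e. ||.|| <= a  for the sup norm). *)
Definition F_assumption {n : nat} (Omega : subset n) (F : Fop n) : Prop :=
  (forall u v w, Cfun Omega u -> Cfun Omega v -> Cfun2 Omega w -> Cfun Omega (F u v w)) /\
  (forall M, 0 < M -> exists L, forall u v w u' v' w',
     Cfun Omega u -> Cfun Omega v -> Cfun2 Omega w ->
     Cfun Omega u' -> Cfun Omega v' -> Cfun2 Omega w' ->
     nle Omega u M -> nle Omega v M -> nle2 Omega w M ->
     nle Omega u' M -> nle Omega v' M -> nle2 Omega w' M ->
     forall a b c, nle Omega (fsub u u') a -> nle Omega (fsub v v') b ->
       nle2 Omega (fsub2 w w') c ->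
       nle Omega (fsub (F u v w) (F u' v' w')) (L * (a + b + c))).

Definition f_assumption {n : nat} (Omega : subset n)
    (f : (pt n -> R) -> (pt n -> R)) (Mf : R) : Prop :=
  (forall u, Cfun Omega u -> Cfun Omega (f u)) /\
  (exists L, forall u u', Cfun Omega u -> Cfun Omega u' ->
     forall a, nle Omega (fsub u u') a -> nle Omega (fsub (f u) (f u')) (L * a)) /\
  (forall u, Cfun Omega u -> forall x, Omega x -> 0 < f u x <= Mf) /\
  (forall u v, Cfun Omega u -> Cfun Omega v -> (forall x, Omega x -> u x <= v x) ->
     forall x, Omega x -> f v x <= f u x).

Definition Ccurve {n : nat} (Omega : subset n) (I : R -> Prop) (A : R -> pt n -> R) : Prop :=
  (forall t, I t -> Cfun Omega (A t)) /\
  (forall t, I t -> forall eps, 0 < eps -> exists delta, 0 < delta /\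
     forall s, I s -> Rabs (s - t) < delta -> nle Omega (fsub (A s) (A t)) eps).

(* phi in Lip_alpha with  ||phi||_{Lip_alpha} <= a + b, where a bounds the sup
   norm and b the Lipschitz seminorm of theta |-> e^{-alpha|theta|} phi(theta). *)
Definition Lip_alpha_bounds {n : nat} (Omega : subset n) (alpha : R)
    (phi : R -> pt n -> R) (a b : R) : Prop :=
  Ccurve Omega (fun th => th <= 0) phi /\
  (forall th, th <= 0 -> nle Omega (fun x => exp (- alpha * Rabs th) * phi th x) a) /\
  (forall th1 th2, th1 <= 0 -> th2 <= 0 ->
     nle Omega (fun x => exp (- alpha * Rabs th1) * phi th1 x
                        - exp (- alpha * Rabs th2) * phi th2 x) (b * Rabs (th1 - th2))).

Definition is_solution {n : nat} (Omega : subset n) (F : Fop n)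
    (f : (pt n -> R) -> (pt n -> R)) (phi : R -> pt n -> R) (tau0 : pt n -> R)
    (r : R) (A tau : R -> pt n -> R) : Prop :=
  Ccurve Omega (fun t => t <= r) A /\
  Ccurve Omega (fun t => 0 <= t <= r) tau /\
  (forall t, 0 <= t <= r -> Cplus Omega (tau t)) /\
  (forall t, t <= 0 -> forall x, Omega x -> A t x = phi t x) /\
  (forall t, 0 <= t <= r -> forall x, Omega x ->
     exists pr : Riemann_integrable
        (fun l => F (A l) (tau l) (fun x' y => A (l - tau l x') y) x) 0 t,
       A t x = phi 0 x + RiemannInt pr) /\
  (forall t, 0 <= t <= r -> forall x, Omega x ->
     exists (pr1 : Riemann_integrable (fun s => f (A s) x) (t - tau t x) t)
            (pr2 : Riemann_integrable (fun s => f (phi s) x) (- tau0 x) 0),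
       RiemannInt pr1 = RiemannInt pr2).

(* Main.v *)
Require Import Defs.
From Stdlib Require Import Reals.
From Stdlib Require Import Lra Lia Classical ClassicalEpsilon.
Open Scope R_scope.

Lemma real_ind (a b : R) (Q : R -> Prop) : a <= b ->
  (forall T, a <= T <= b -> (forall s, a <= s < T -> Q s) ->
     exists d, 0 < d /\ forall s, a <= s <= b -> T <= s < T + d -> Q s) ->
  forall s, a <= s <= b -> Q s.
Proof.
  intros Hab H.
  set (E := fun x => a <= x <= b /\ forall s, a <= s < x -> Q s).
  assert (Hb : bound E) by (exists b; intros x [Hx _]; lra).
  assert (He : exists x, E x) by (exists a; split; [lra| intros; lra]).
  destruct (completeness E Hb He) as [c [Hub Hlub]].
  assert (Hac : a <= c) by (apply Hub; split; [lra | intros; lra]).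
  assert (Hcb : c <= b) by (apply Hlub; intros x [Hx _]; lra).
  assert (Hc : forall s, a <= s < c -> Q s).
  { intros s Hs. destruct (classic (Q s)) as [|HQ]; [auto|].
    exfalso. assert (c <= s); [|lra]. apply Hlub. intros x [Hx Hx2].
    destruct (Rle_or_lt x s); auto. exfalso; apply HQ; apply Hx2; lra. }
  destruct (H c (conj Hac Hcb) Hc) as [d [Hd Hd2]].
  assert (Hcb' : c = b).
  { destruct (Rle_or_lt b c) as [|Hlt]; [lra|]. exfalso.
    set (x := Rmin (c + d/2) b).
    assert (E x).
    { split. unfold x; split; [apply Rmin_glb; lra| apply Rmin_r].
      intros s Hs. destruct (Rlt_or_le s c). apply Hc; lra.
      apply Hd2; unfold x in Hs; pose proof (Rmin_l (c+d/2) b); pose proof (Rmin_r (c+d/2) b); lra. }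
    assert (x <= c) by (apply Hub; auto).
    unfold x in H1. unfold Rmin in H1. destruct (Rle_dec (c + d/2) b); lra. }
  subst c. intros s Hs. destruct (Rlt_or_le s b). apply Hc; lra. apply Hd2; lra.
Qed.

Lemma nat_unbounded (A : R) : exists N, forall k, (N <= k)%nat -> A < INR k.
Proof.
  destruct (INR_archimed 1 A) as [N HN]; [lra|]. exists N. intros k Hk.
  apply le_INR in Hk. lra.
Qed.

Lemma fin_eventually : forall n (P : Fin.t n -> nat -> Prop),
  (forall i, exists N, forall k, (N <= k)%nat -> P i k) ->
  exists N, forall k, (N <= k)%nat -> forall i, P i k.
Proof.
  induction n; intros P H.
  - exists 0%nat. intros k _ i. apply (Fin.case0 (fun i => P i k)).
  - destruct (H Fin.F1) as [N0 HN0].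
    destruct (IHn (fun j => P (Fin.FS j))) as [N1 HN1].
    { intro j; apply H. }
    exists (Nat.max N0 N1). intros k Hk i.
    apply (Fin.caseS' i (fun i => P i k)).
    + apply HN0; lia.
    + intro j; apply (HN1 k); lia.
Qed.

Lemma pt_cv_close {n : nat} (u : nat -> pt n) (l : pt n) : pt_cv u l ->
  forall d, 0 < d -> exists N, forall k, (N <= k)%nat -> close l (u k) d.
Proof.
  intros H d Hd. apply (fin_eventually n (fun i k => Rabs (l i - u k i) < d)).
  intro i. destruct (H i d Hd) as [N HN]. exists N. intros k Hk.
  specialize (HN k Hk). unfold Rdist in HN. rewrite Rabs_minus_sym; auto.
Qed.

Lemma subseq_ge (phi : nat -> nat) : (forall k, (phi k < phi (S k))%nat) -> forall k, (k <= phi k)%nat.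
Proof. intros H; induction k; [lia|]. specialize (H k); lia. Qed.

Lemma cfun_subseq {n : nat} (Omega : subset n) (u : pt n -> R) :
  compact_set Omega -> Cfun Omega u -> forall x : nat -> pt n, (forall k, Omega (x k)) ->
  exists (phi : nat -> nat) (l : pt n), (forall k, (k <= phi k)%nat) /\ Omega l /\
    forall eps, 0 < eps -> exists N, forall k, (N <= k)%nat -> Rabs (u (x (phi k)) - u l) < eps.
Proof.
  intros Hc Hu x Hx. destruct (Hc x Hx) as [phi [l [Hphi [Hl Hcv]]]].
  exists phi, l. split; [apply subseq_ge; auto|]. split; auto.
  intros eps Heps. destruct (Hu l Hl eps Heps) as [d [Hd Hd2]].
  destruct (pt_cv_close _ _ Hcv d Hd) as [N HN]. exists N. intros k Hk.
  apply Hd2; auto.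
Qed.

Lemma cfun_bounded {n : nat} (Omega : subset n) (u : pt n -> R) :
  compact_set Omega -> Cfun Omega u -> exists M, forall x, Omega x -> Rabs (u x) <= M.
Proof.
  intros Hc Hu. apply NNPP. intro HNb.
  assert (Hk : forall k : nat, exists x, Omega x /\ INR k < Rabs (u x)).
  { intro k. apply NNPP; intro H. apply HNb. exists (INR k). intros x Hx.
    apply Rnot_lt_le. intro. apply H. exists x; auto. }
  set (x := fun k => proj1_sig (constructive_indefinite_description _ (Hk k))).
  assert (Hx : forall k, Omega (x k) /\ INR k < Rabs (u (x k))).
  { intro k. unfold x. destruct (constructive_indefinite_description _ (Hk k)); auto. }
  destruct (cfun_subseq Omega u Hc Hu x (fun k => proj1 (Hx k))) as [phi [l [Hphi [Hl Hcv]]]].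
  destruct (Hcv 1) as [N HN]; [lra|].
  destruct (nat_unbounded (Rabs (u l) + 1)) as [N' HN'].
  set (k := Nat.max N N').
  specialize (HN k (Nat.le_max_l _ _)). specialize (HN' k (Nat.le_max_r _ _)).
  destruct (Hx (phi k)) as [_ H2]. pose proof (le_INR _ _ (Hphi k)).
  pose proof (Rabs_triang_inv (u (x (phi k))) (u l)). lra.
Qed.

Lemma cfun_pos_inf {n : nat} (Omega : subset n) (u : pt n -> R) :
  compact_set Omega -> Cfun Omega u -> (forall x, Omega x -> 0 < u x) ->
  exists m, 0 < m /\ forall x, Omega x -> m <= u x.
Proof.
  intros Hc Hu Hpos. apply NNPP. intro HNb.
  assert (Hk : forall k : nat, exists x, Omega x /\ u x < / (INR k + 1)).
  { intro k. apply NNPP; intro H. apply HNb. exists (/ (INR k + 1)).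
    split. apply Rinv_0_lt_compat. pose proof (pos_INR k); lra.
    intros x Hx. apply Rnot_lt_le. intro. apply H. exists x; auto. }
  set (x := fun k => proj1_sig (constructive_indefinite_description _ (Hk k))).
  assert (Hx : forall k, Omega (x k) /\ u (x k) < / (INR k + 1)).
  { intro k. unfold x. destruct (constructive_indefinite_description _ (Hk k)); auto. }
  destruct (cfun_subseq Omega u Hc Hu x (fun k => proj1 (Hx k))) as [phi [l [Hphi [Hl Hcv]]]].
  pose proof (Hpos l Hl) as Hul.
  destruct (Hcv (u l / 2)) as [N HN]; [lra|].
  pose proof RinvN_cv as Hrv; unfold Un_cv in Hrv; destruct (Hrv (u l / 2) ltac:(lra)) as [N' HN'].
  set (k := Nat.max N N').
  specialize (HN k (Nat.le_max_l _ _)). specialize (HN' (phi k)).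
  assert (phi k >= N')%nat. { pose proof (Hphi k). unfold k in *. lia. }
  specialize (HN' H). unfold Rdist, RinvN in HN'; simpl in HN'.
  destruct (Hx (phi k)) as [_ H2].
  rewrite Rminus_0_r in HN'. pose proof (Rle_abs (/ (INR (phi k) + 1))).
  pose proof (Rabs_def2 _ _ HN). lra.
Qed.

Lemma Rabs_le_inv (x c : R) : Rabs x <= c -> - c <= x <= c.
Proof. unfold Rabs; destruct (Rcase_abs x); lra. Qed.

Lemma curve_bounded {n : nat} (Omega : subset n) (g : R -> pt n -> R) (a b : R) :
  compact_set Omega -> a <= b ->
  (forall t, a <= t <= b -> Cfun Omega (g t)) ->
  (forall t, a <= t <= b -> forall eps, 0 < eps -> exists d, 0 < d /\
     forall s, a <= s <= b -> Rabs (s - t) < d -> nle Omega (fsub (g s) (g t)) eps) ->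
  exists M, forall t, a <= t <= b -> forall x, Omega x -> Rabs (g t x) <= M.
Proof.
  intros Hc Hab Hcf Hct.
  assert (H : forall s, a <= s <= b -> exists M, forall t, a <= t <= s -> forall x, Omega x -> Rabs (g t x) <= M).
  { apply real_ind; auto. intros T HT Hbel.
    destruct (Hct T HT 1) as [d [Hd Hd2]]; [lra|].
    destruct (cfun_bounded Omega (g T) Hc (Hcf T HT)) as [B HB].
    exists d. split; auto. intros s Hs HTs.
    destruct (Rlt_or_le a T) as [HaT|HaT].
    - set (s0 := Rmax a (T - d/2)).
      assert (Hs0 : a <= s0 < T) by (unfold s0; unfold Rmax; destruct (Rle_dec a (T - d/2)); lra).
      destruct (Hbel s0 Hs0) as [M0 HM0].
      exists (Rmax M0 (B + 1)). intros t Ht x Hx.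
      destruct (Rle_or_lt t s0).
      + eapply Rle_trans; [apply HM0; auto; lra| apply Rmax_l].
      + eapply Rle_trans; [|apply Rmax_r].
        assert (H0 : Rabs (t - T) < d) by (apply Rabs_def1; unfold s0 in *; pose proof (Rmax_r a (T - d/2)); lra).
        specialize (Hd2 t ltac:(lra) H0 x Hx). unfold fsub in Hd2.
        specialize (HB x Hx). pose proof (Rabs_triang_inv (g t x) (g T x)). lra.
    - exists (B + 1). intros t Ht x Hx.
      assert (H0 : Rabs (t - T) < d) by (apply Rabs_def1; lra).
      specialize (Hd2 t ltac:(lra) H0 x Hx). unfold fsub in Hd2.
      specialize (HB x Hx). pose proof (Rabs_triang_inv (g t x) (g T x)). lra. }
  destruct (H b ltac:(lra)) as [M HM]. exists M. intros; apply HM; auto; lra.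
Qed.

Lemma int_bound (g1 g2 : R -> R) (a b T C : R) (pr1 : Riemann_integrable g1 a b)
  (pr2 : Riemann_integrable g2 a b) : a <= b -> T <= b -> 0 <= C ->
  (forall s, a < s < b -> s < T -> g1 s = g2 s) ->
  (forall s, a < s < b -> T <= s -> Rabs (g1 s - g2 s) <= C) ->
  Rabs (RiemannInt pr1 - RiemannInt pr2) <= C * (b - T).
Proof.
  intros Hab HTb HC Heq Hle.
  set (h := fun x => g1 x + (-1) * g2 x).
  pose proof (RiemannInt_P10 (-1) pr1 pr2) as prh.
  replace (RiemannInt pr1 - RiemannInt pr2) with (RiemannInt prh) by (rewrite (RiemannInt_P12 pr1 pr2 prh Hab); ring).
  destruct (Rle_or_lt T a) as [HTa|HaT].
  - destruct (@RiemannInt_const_bound _ a b (-C) C prh Hab) as [H1 H2].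
    { intros x Hx. specialize (Hle x Hx ltac:(lra)). unfold h.
      apply Rabs_le_inv in Hle. lra. }
    apply Rabs_le. nra.
  - pose proof (RiemannInt_P22 prh (conj (Rlt_le _ _ HaT) HTb)) as pra.
    pose proof (RiemannInt_P23 prh (conj (Rlt_le _ _ HaT) HTb)) as prb.
    rewrite <- (RiemannInt_P26 pra prb prh).
    assert (H0 : RiemannInt pra = 0).
    { rewrite (RiemannInt_P18 pra (RiemannInt_P14 a T 0)).
      rewrite RiemannInt_P15; ring. lra.
      intros x Hx. unfold h, fct_cte. rewrite Heq; try lra. }
    destruct (@RiemannInt_const_bound _ T b (-C) C prb HTb) as [H1 H2].
    { intros x Hx. specialize (Hle x ltac:(lra) ltac:(lra)). unfold h.
      apply Rabs_le_inv in Hle. lra. }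
    rewrite H0. apply Rabs_le. nra.
Qed.

Lemma close_mono {n : nat} (x y : pt n) d1 d2 : d1 <= d2 -> close x y d1 -> close x y d2.
Proof. intros H Hc i. specialize (Hc i). lra. Qed.

Lemma abs0 (z : R) : Rabs z <= 0 -> z = 0.
Proof. intro H. pose proof (Rabs_pos z). apply Rabs_le_inv in H. lra. Qed.

Lemma F_local {n : nat} (Omega : subset n) (F : Fop n) (HF : F_assumption Omega F)
  (M L : R) (HL : forall u v w u' v' w',
     Cfun Omega u -> Cfun Omega v -> Cfun2 Omega w ->
     Cfun Omega u' -> Cfun Omega v' -> Cfun2 Omega w' ->
     nle Omega u M -> nle Omega v M -> nle2 Omega w M ->
     nle Omega u' M -> nle Omega v' M -> nle2 Omega w' M ->
     forall a b c, nle Omega (fsub u u') a -> nle Omega (fsub v v') b ->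
       nle2 Omega (fsub2 w w') c ->
       nle Omega (fsub (F u v w) (F u' v' w')) (L * (a + b + c)))
  u v w u' v' w' :
  Cfun Omega u -> Cfun Omega v -> Cfun2 Omega w ->
  Cfun Omega u' -> Cfun Omega v' -> Cfun2 Omega w' ->
  nle Omega u M -> nle Omega v M -> nle2 Omega w M ->
  nle Omega u' M -> nle Omega v' M -> nle2 Omega w' M ->
  (forall x, Omega x -> u x = u' x) -> (forall x, Omega x -> v x = v' x) ->
  (forall x y, Omega x -> Omega y -> w x y = w' x y) ->
  forall x, Omega x -> F u v w x = F u' v' w' x.
Proof.
  intros c1 c2 c3 c4 c5 c6 b1 b2 b3 b4 b5 b6 Eu Ev Ew x Hx.
  assert (H15 : nle Omega (fsub (F u v w) (F u' v' w')) (L * (0 + 0 + 0))).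
  { apply HL; auto; unfold nle, nle2, fsub, fsub2; intros.
    rewrite Eu; auto. rewrite Rminus_diag, Rabs_R0; lra.
    rewrite Ev; auto. rewrite Rminus_diag, Rabs_R0; lra.
    rewrite Ew; auto. rewrite Rminus_diag, Rabs_R0; lra. }
  specialize (H15 x Hx). unfold fsub in H15.
  replace (L * (0 + 0 + 0)) with 0 in H15 by ring. apply abs0 in H15. lra.
Qed.

Lemma f_local {n : nat} (Omega : subset n) f (Lf : R)
  (HLf : forall u u', Cfun Omega u -> Cfun Omega u' ->
     forall a, nle Omega (fsub u u') a -> nle Omega (fsub (f u) (f u')) (Lf * a))
  u u' : Cfun Omega u -> Cfun Omega u' -> (forall x, Omega x -> u x = u' x) ->
  forall x, Omega x -> f u x = f u' x.
Proof.
  intros Hu Hu' He x Hx.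
  assert (H : nle Omega (fsub (f u) (f u')) (Lf * 0)).
  { apply HLf; auto. intros y Hy. unfold fsub. rewrite He; auto.
    rewrite Rminus_diag, Rabs_R0; lra. }
  specialize (H x Hx). unfold fsub in H. rewrite Rmult_0_r in H. apply abs0 in H. lra.
Qed.

Lemma W_cont {n : nat} (Omega : subset n) (r l : R) (A : R -> pt n -> R) (tl : pt n -> R) :
  Ccurve Omega (fun t => t <= r) A -> Cplus Omega tl -> l <= r ->
  Cfun2 Omega (fun x' y => A (l - tl x') y).
Proof.
  intros [HAc HAt] [Htc Htp] Hl x y Hx Hy eps Heps.
  set (s0 := l - tl x).
  assert (Hs0 : s0 <= r) by (unfold s0; pose proof (Htp x Hx); lra).
  destruct (HAt s0 Hs0 (eps/3)) as [d1 [Hd1 Hd1']]; [lra|].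
  destruct (Htc x Hx d1 Hd1) as [d2 [Hd2 Hd2']].
  destruct (HAc s0 Hs0 y Hy (eps/3)) as [d3 [Hd3 Hd3']]; [lra|].
  exists (Rmin d2 d3). split; [apply Rmin_glb_lt; auto|].
  intros x' y' Hx' Hy' Hc1 Hc2.
  assert (Ht : Rabs (l - tl x' - s0) < d1).
  { unfold s0. replace (l - tl x' - (l - tl x)) with (- (tl x' - tl x)) by ring.
    rewrite Rabs_Ropp. apply Hd2'; auto. eapply close_mono; [apply Rmin_l|eauto]. }
  pose proof (Htp x' Hx').
  specialize (Hd1' (l - tl x') ltac:(lra) Ht y' Hy'). unfold fsub in Hd1'.
  specialize (Hd3' y' Hy' ltac:(eapply close_mono; [apply Rmin_r|eauto])).
  fold s0. replace (A (l - tl x') y' - A s0 y) with ((A (l - tl x') y' - A s0 y') + (A s0 y' - A s0 y)) by ring.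
  eapply Rle_lt_trans; [apply Rabs_triang|]. lra.
Qed.

Lemma pow2_gt (k : nat) : INR k < 2 ^ k.
Proof.
  induction k. simpl; lra. rewrite S_INR. simpl.
  pose proof (pow_R1_Rle 2 k ltac:(lra)). lra.
Qed.

Lemma zero_of_halving (z D0 : R) : 0 <= D0 -> (forall k, Rabs z <= D0 / 2 ^ k) -> z = 0.
Proof.
  intros HD H. destruct (Req_dec z 0); auto. exfalso.
  pose proof (Rabs_pos_lt z H0).
  destruct (nat_unbounded (D0 / Rabs z)) as [N HN]. specialize (HN N (Nat.le_refl _)).
  pose proof (pow2_gt N). specialize (H N).
  assert (Hp2 : 0 < 2 ^ N) by (apply pow_lt; lra).
  apply (Rmult_le_compat_r (2 ^ N)) in H; [|lra].
  unfold Rdiv in H. rewrite Rmult_assoc, Rinv_l in H by lra.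
  assert (D0 / Rabs z < 2 ^ N) by lra.
  apply (Rmult_lt_compat_r (Rabs z)) in H3; auto.
  unfold Rdiv in H3. rewrite Rmult_assoc, Rinv_l in H3 by lra. lra.
Qed.

Lemma exp_mono (x y : R) : x <= y -> exp x <= exp y.
Proof. intro H. destruct (Rle_lt_or_eq_dec _ _ H). left; apply exp_increasing; auto. subst; lra. Qed.

Lemma exp_lip1 (u v c : R) : v <= u -> u <= c -> exp u - exp v <= exp c * (u - v).
Proof.
  intros Hvu Huc. pose proof (exp_ineq1_le (v - u)).
  replace (exp v) with (exp u * exp (v - u)) by (rewrite <- exp_plus; f_equal; ring).
  pose proof (exp_pos u). pose proof (exp_mono _ _ Huc).
  assert (exp u - exp u * exp (v - u) <= exp u * (u - v)) by nra. nra.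
Qed.

Lemma exp_lip (u v c : R) : u <= c -> v <= c -> Rabs (exp u - exp v) <= exp c * Rabs (u - v).
Proof.
  intros Hu Hv. destruct (Rle_or_lt v u).
  - pose proof (exp_mono _ _ H). rewrite !Rabs_right by lra. apply exp_lip1; auto.
  - pose proof (exp_mono u v ltac:(lra)). rewrite Rabs_minus_sym, (Rabs_minus_sym u v).
    rewrite (Rabs_right (exp v - exp u)) by lra. rewrite (Rabs_right (v - u)) by lra.
    apply exp_lip1; lra.
Qed.

Lemma phi_lip {n : nat} (Omega : subset n) alpha phi a b K :
  Lip_alpha_bounds Omega alpha phi a b -> 0 <= alpha -> 0 <= K ->
  exists Lam, 0 <= Lam /\ forall t1 t2, -K <= t1 <= 0 -> -K <= t2 <= 0 ->
    forall y, Omega y -> Rabs (phi t1 y - phi t2 y) <= Lam * Rabs (t1 - t2).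
Proof.
  intros [_ [Ha Hb]] Hal HK.
  exists (exp (alpha * K) * (Rabs b + Rabs a * alpha)). split.
  { pose proof (exp_pos (alpha * K)). pose proof (Rabs_pos a). pose proof (Rabs_pos b). apply Rmult_le_pos; [lra|]. pose proof (Rmult_le_pos _ _ H0 Hal). lra. }
  intros t1 t2 H1 H2 y Hy.
  set (e1 := exp (alpha * Rabs t1)). set (e2 := exp (alpha * Rabs t2)).
  set (g1 := exp (- alpha * Rabs t1) * phi t1 y). set (g2 := exp (- alpha * Rabs t2) * phi t2 y).
  assert (E1 : phi t1 y = e1 * g1).
  { unfold e1, g1. rewrite <- Rmult_assoc, <- exp_plus. replace (alpha * Rabs t1 + - alpha * Rabs t1) with 0 by ring. rewrite exp_0; ring. }
  assert (E2 : phi t2 y = e2 * g2).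
  { unfold e2, g2. rewrite <- Rmult_assoc, <- exp_plus. replace (alpha * Rabs t2 + - alpha * Rabs t2) with 0 by ring. rewrite exp_0; ring. }
  rewrite E1, E2. replace (e1 * g1 - e2 * g2) with (e1 * (g1 - g2) + g2 * (e1 - e2)) by ring.
  eapply Rle_trans; [apply Rabs_triang|]. rewrite !Rabs_mult.
  assert (Ht1 : Rabs t1 <= K) by (rewrite Rabs_left1; lra).
  assert (Ht2 : Rabs t2 <= K) by (rewrite Rabs_left1; lra).
  assert (He1 : Rabs e1 <= exp (alpha * K)).
  { unfold e1. rewrite Rabs_right by (left; apply exp_pos). apply exp_mono. nra. }
  assert (Hg : Rabs (g1 - g2) <= b * Rabs (t1 - t2)) by (apply (Hb t1 t2); lra || auto).
  assert (Hg2 : Rabs g2 <= a) by (apply (Ha t2); lra || auto).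
  assert (Hee : Rabs (e1 - e2) <= exp (alpha * K) * (alpha * Rabs (t1 - t2))).
  { unfold e1, e2. eapply Rle_trans; [apply (exp_lip _ _ (alpha * K)); apply Rmult_le_compat_l; lra|].
    apply Rmult_le_compat_l; [left; apply exp_pos|].
    rewrite <- Rmult_minus_distr_l, Rabs_mult, (Rabs_right alpha) by lra.
    apply Rmult_le_compat_l; auto. apply Rabs_triang_inv2. }
  pose proof (Rabs_pos (e1 - e2)). pose proof (Rabs_pos (g1 - g2)). pose proof (Rabs_pos (t1 - t2)).
  pose proof (Rabs_pos g2). pose proof (Rabs_pos e1). pose proof (exp_pos (alpha * K)).
  pose proof (Rle_abs a). pose proof (Rle_abs b).
  assert (X1 : Rabs e1 * Rabs (g1 - g2) <= exp (alpha * K) * (Rabs b * Rabs (t1 - t2))).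
  { apply Rmult_le_compat; auto. eapply Rle_trans; [apply Hg|]. apply Rmult_le_compat_r; auto. }
  assert (X2 : Rabs g2 * Rabs (e1 - e2) <= Rabs a * (exp (alpha * K) * (alpha * Rabs (t1 - t2)))).
  { apply Rmult_le_compat; auto. lra. }
  replace (exp (alpha * K) * (Rabs b + Rabs a * alpha) * Rabs (t1 - t2)) with
    (exp (alpha * K) * (Rabs b * Rabs (t1 - t2)) + Rabs a * (exp (alpha * K) * (alpha * Rabs (t1 - t2)))) by ring.
  lra.
Qed.

Lemma A_lip_pos {n : nat} (Omega : subset n) F f phi tau0 r A tau C :
  is_solution Omega F f phi tau0 r A tau ->
  (forall l, 0 <= l <= r -> forall y, Omega y ->
     Rabs (F (A l) (tau l) (fun x' y => A (l - tau l x') y) y) <= C) ->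
  forall s1 s2, 0 <= s2 <= s1 -> s1 <= r -> forall y, Omega y ->
    Rabs (A s1 y - A s2 y) <= C * (s1 - s2).
Proof.
  intros [_ [_ [_ [_ [Hint _]]]]] HC s1 s2 Hs Hs1 y Hy.
  destruct (Hint s1 ltac:(lra) y Hy) as [pr1 E1].
  destruct (Hint s2 ltac:(lra) y Hy) as [pr2 E2].
  pose proof (RiemannInt_P22 pr1 Hs) as pra. pose proof (RiemannInt_P23 pr1 Hs) as prb.
  rewrite E1, E2, <- (RiemannInt_P26 pra prb pr1), (RiemannInt_P5 pra pr2).
  replace (phi 0 y + (RiemannInt pr2 + RiemannInt prb) - (phi 0 y + RiemannInt pr2)) with (RiemannInt prb) by ring.
  destruct (@RiemannInt_const_bound _ s2 s1 (-C) C prb ltac:(lra)) as [H1 H2].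
  { intros x Hx. apply Rabs_le_inv. apply HC; auto; lra. }
  apply Rabs_le. lra.
Qed.

Lemma A_lip {n : nat} (Omega : subset n) F f phi tau0 r A tau C Lp K :
  is_solution Omega F f phi tau0 r A tau -> 0 <= Lp -> 0 <= K -> 0 < r ->
  (forall s1 s2, 0 <= s2 <= s1 -> s1 <= r -> forall y, Omega y ->
    Rabs (A s1 y - A s2 y) <= C * (s1 - s2)) ->
  (forall t1 t2, -K <= t1 <= 0 -> -K <= t2 <= 0 ->
    forall y, Omega y -> Rabs (phi t1 y - phi t2 y) <= Lp * Rabs (t1 - t2)) ->
  forall s1 s2, -K <= s1 <= r -> -K <= s2 <= r -> forall y, Omega y ->
    Rabs (A s1 y - A s2 y) <= (Rmax C 0 + Lp) * Rabs (s1 - s2).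
Proof.
  intros Hs HLp HK Hr Hpos Hphi.
  destruct Hs as [_ [_ [_ [Hinit _]]]].
  assert (HC0 : 0 <= Rmax C 0) by apply Rmax_r. pose proof (Rmax_l C 0).
  assert (Main : forall s1 s2, -K <= s2 <= s1 -> s1 <= r -> forall y, Omega y ->
    Rabs (A s1 y - A s2 y) <= (Rmax C 0 + Lp) * (s1 - s2)).
  { intros s1 s2 Hs Hs1 y Hy. destruct (Rle_or_lt 0 s2).
    - eapply Rle_trans; [apply Hpos; auto; lra|]. apply Rmult_le_compat_r; lra.
    - destruct (Rle_or_lt s1 0).
      + rewrite !Hinit by (auto; lra). eapply Rle_trans; [apply Hphi; auto; lra|].
        rewrite Rabs_right by lra. apply Rmult_le_compat_r; lra.
      + replace (A s1 y - A s2 y) with ((A s1 y - A 0 y) + (A 0 y - A s2 y)) by ring.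
        eapply Rle_trans; [apply Rabs_triang|].
        assert (X1 : Rabs (A s1 y - A 0 y) <= C * (s1 - 0)) by (apply Hpos; auto; lra).
        assert (X2 : Rabs (A 0 y - A s2 y) <= Lp * Rabs (0 - s2)).
        { rewrite !Hinit by (auto; lra). apply Hphi; auto; lra. }
        rewrite (Rabs_right (0 - s2)) in X2 by lra.
        assert (C * (s1 - 0) <= Rmax C 0 * (s1 - 0)) by (apply Rmult_le_compat_r; lra).
        assert (Lp * (0 - s2) <= Lp * (s1 - s2)) by (apply Rmult_le_compat_l; lra).
        assert (Rmax C 0 * (s1 - 0) <= Rmax C 0 * (s1 - s2)) by (apply Rmult_le_compat_l; lra).
        lra. }
  intros s1 s2 H1 H2 y Hy. destruct (Rle_or_lt s2 s1).
  - rewrite (Rabs_right (s1 - s2)) by lra. apply Main; auto; lra.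
  - rewrite Rabs_minus_sym, (Rabs_minus_sym s1 s2), (Rabs_right (s2 - s1)) by lra. apply Main; auto; lra.
Qed.

Lemma tau_est {n : nat} (Omega : subset n) F f Lf phi tau0 r Ai taui Aj tauj m K T t D x :
  is_solution Omega F f phi tau0 r Ai taui -> is_solution Omega F f phi tau0 r Aj tauj ->
  (forall u u', Cfun Omega u -> Cfun Omega u' ->
     forall a, nle Omega (fsub u u') a -> nle Omega (fsub (f u) (f u')) (Lf * a)) ->
  (forall s, -K <= s <= r -> forall x, Omega x -> m <= f (Ai s) x) ->
  (forall s, 0 <= s <= r -> forall x, Omega x -> taui s x <= K) ->
  (forall s, s < T -> forall y, Omega y -> Ai s y = Aj s y) ->
  (forall s, T <= s <= t -> forall y, Omega y -> Rabs (Ai s y - Aj s y) <= D) ->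
  0 <= Lf -> 0 <= D -> 0 <= T -> T <= t -> t <= r -> Omega x -> tauj t x <= taui t x ->
  m * (taui t x - tauj t x) <= Lf * D * (t - T).
Proof.
  intros Hsi Hsj HLf Hm HK Heq HD HLf0 HD0 HT HTt Htr Hx Hle.
  destruct Hsi as [[HAic _] [_ [Hicp [_ [_ Htaui]]]]].
  destruct Hsj as [[HAjc _] [_ [Hjcp [_ [_ Htauj]]]]].
  destruct (Htaui t ltac:(lra) x Hx) as [pri [pphi Ei]].
  destruct (Htauj t ltac:(lra) x Hx) as [prj [pphi' Ej]].
  rewrite (RiemannInt_P5 pphi' pphi) in Ej. rewrite <- Ej in Ei.
  pose proof (proj2 (Hjcp t ltac:(lra)) x Hx) as Htj0.
  assert (Hord : t - taui t x <= t - tauj t x <= t) by lra.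
  pose proof (RiemannInt_P22 pri Hord) as pra. pose proof (RiemannInt_P23 pri Hord) as prb.
  rewrite <- (RiemannInt_P26 pra prb pri) in Ei.
  assert (Ha : m * ((t - tauj t x) - (t - taui t x)) <= RiemannInt pra).
  { rewrite <- (RiemannInt_P15 (RiemannInt_P14 (t - taui t x) (t - tauj t x) m)).
    apply RiemannInt_P19; [lra|]. intros s Hs. unfold fct_cte. apply Hm; auto.
    pose proof (HK t ltac:(lra) x Hx). lra. }
  assert (Hb : Rabs (RiemannInt prj - RiemannInt prb) <= Lf * D * (t - T)).
  { apply int_bound; [lra|lra|apply Rmult_le_pos; lra| |].
    - intros s Hs HsT. apply (f_local Omega f Lf HLf); try (apply HAjc || apply HAic); try lra; auto.
      intros y Hy. symmetry; apply Heq; auto.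
    - intros s Hs HsT.
      assert (H : nle Omega (fsub (f (Aj s)) (f (Ai s))) (Lf * D)).
      { apply HLf; try (apply HAjc || apply HAic); try lra.
        intros y Hy. unfold fsub. rewrite Rabs_minus_sym. apply HD; auto; lra. }
      apply H; auto. }
  apply Rabs_le_inv in Hb.
  replace (t - tauj t x - (t - taui t x)) with (taui t x - tauj t x) in Ha by ring. lra.
Qed.

Lemma A_est {n : nat} (Omega : subset n) (F : Fop n) (HF : F_assumption Omega F) f phi tau0 r
  A1 tau1 A2 tau2 (M L Lam K T t D : R) x
  (HL : forall u v w u' v' w',
     Cfun Omega u -> Cfun Omega v -> Cfun2 Omega w ->
     Cfun Omega u' -> Cfun Omega v' -> Cfun2 Omega w' ->
     nle Omega u M -> nle Omega v M -> nle2 Omega w M ->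
     nle Omega u' M -> nle Omega v' M -> nle2 Omega w' M ->
     forall a b c, nle Omega (fsub u u') a -> nle Omega (fsub v v') b ->
       nle2 Omega (fsub2 w w') c ->
       nle Omega (fsub (F u v w) (F u' v' w')) (L * (a + b + c))) :
  is_solution Omega F f phi tau0 r A1 tau1 -> is_solution Omega F f phi tau0 r A2 tau2 ->
  0 <= L -> 0 <= D -> 0 <= Lam -> 0 <= K ->
  (forall s, -K <= s <= r -> nle Omega (A1 s) M) ->
  (forall s, -K <= s <= r -> nle Omega (A2 s) M) ->
  (forall s, 0 <= s <= r -> nle Omega (tau1 s) M) ->
  (forall s, 0 <= s <= r -> nle Omega (tau2 s) M) ->
  (forall s, 0 <= s <= r -> forall x, Omega x -> tau1 s x <= K) ->
  (forall s, 0 <= s <= r -> forall x, Omega x -> tau2 s x <= K) ->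
  (forall s1 s2, -K <= s1 <= r -> -K <= s2 <= r -> forall y, Omega y ->
    Rabs (A1 s1 y - A1 s2 y) <= Lam * Rabs (s1 - s2)) ->
  (forall s, s < T -> forall y, Omega y -> A1 s y = A2 s y) ->
  (forall s, 0 <= s < T -> forall y, Omega y -> tau1 s y = tau2 s y) ->
  (forall s, T <= s <= t -> forall y, Omega y -> Rabs (A1 s y - A2 s y) <= D) ->
  (forall s, T <= s <= t -> forall y, Omega y -> Rabs (tau1 s y - tau2 s y) <= D) ->
  0 <= T -> T <= t -> t <= r -> Omega x ->
  Rabs (A1 t x - A2 t x) <= L * (3 + Lam) * D * (t - T).
Proof.
  intros Hs1 Hs2 HL0 HD0 HLam0 HK0 HM1 HM2 HMt1 HMt2 HK1 HK2 HLam Heq Heqt HD HDt HT HTt Htr Hx.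
  pose proof Hs1 as [HA1 [_ [Ht1p [_ [Hint1 _]]]]].
  pose proof Hs2 as [HA2 [_ [Ht2p [_ [Hint2 _]]]]].
  assert (HDall : forall s, s <= t -> forall y, Omega y -> Rabs (A1 s y - A2 s y) <= D).
  { intros s Hs y Hy. destruct (Rlt_or_le s T).
    rewrite Heq, Rminus_diag, Rabs_R0; auto. apply HD; auto; lra. }
  destruct (Hint1 t ltac:(lra) x Hx) as [pr1 E1].
  destruct (Hint2 t ltac:(lra) x Hx) as [pr2 E2].
  rewrite E1, E2. replace (phi 0 x + RiemannInt pr1 - (phi 0 x + RiemannInt pr2)) with
    (RiemannInt pr1 - RiemannInt pr2) by ring.
  assert (Hfacts : forall s, 0 <= s <= r ->
     Cfun Omega (A1 s) /\ Cfun Omega (tau1 s) /\ Cfun2 Omega (fun x' y => A1 (s - tau1 s x') y) /\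
     Cfun Omega (A2 s) /\ Cfun Omega (tau2 s) /\ Cfun2 Omega (fun x' y => A2 (s - tau2 s x') y) /\
     nle Omega (A1 s) M /\ nle Omega (tau1 s) M /\ nle2 Omega (fun x' y => A1 (s - tau1 s x') y) M /\
     nle Omega (A2 s) M /\ nle Omega (tau2 s) M /\ nle2 Omega (fun x' y => A2 (s - tau2 s x') y) M).
  { intros s Hs. pose proof (Ht1p s Hs) as [Hc1 Hp1]. pose proof (Ht2p s Hs) as [Hc2 Hp2].
    assert (a1 : Cfun Omega (A1 s)) by (apply (proj1 HA1); lra).
    assert (a2 : Cfun2 Omega (fun x' y => A1 (s - tau1 s x') y)) by (apply (W_cont Omega r s); auto; lra).
    assert (a3 : Cfun Omega (A2 s)) by (apply (proj1 HA2); lra).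
    assert (a4 : Cfun2 Omega (fun x' y => A2 (s - tau2 s x') y)) by (apply (W_cont Omega r s); auto; lra).
    assert (a5 : nle Omega (A1 s) M) by (apply HM1; lra).
    assert (a6 : nle Omega (tau1 s) M) by (apply HMt1; auto).
    assert (a7 : nle2 Omega (fun x' y => A1 (s - tau1 s x') y) M).
    { intros x' y Hx' Hy. pose proof (Hp1 x' Hx'). pose proof (HK1 s Hs x' Hx'). apply HM1; auto; lra. }
    assert (a8 : nle Omega (A2 s) M) by (apply HM2; lra).
    assert (a9 : nle Omega (tau2 s) M) by (apply HMt2; auto).
    assert (a10 : nle2 Omega (fun x' y => A2 (s - tau2 s x') y) M).
    { intros x' y Hx' Hy. pose proof (Hp2 x' Hx'). pose proof (HK2 s Hs x' Hx'). apply HM2; auto; lra. }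
    tauto. }
  apply int_bound; [lra|lra| | |].
  - repeat apply Rmult_le_pos; lra.
  - intros s Hs HsT.
    destruct (Hfacts s ltac:(lra)) as [c1 [c2 [c3 [c4 [c5 [c6 [b1 [b2 [b3 [b4 [b5 b6]]]]]]]]]]].
    apply (F_local Omega F HF M L HL); try assumption.
    + intros y Hy. apply Heq; auto.
    + intros y Hy. apply Heqt; auto; lra.
    + intros x' y Hx' Hy. rewrite Heqt by (auto; lra). apply Heq; auto.
      pose proof (proj2 (Ht2p s ltac:(lra)) x' Hx'). lra.
  - intros s Hs HsT.
    destruct (Hfacts s ltac:(lra)) as [c1 [c2 [c3 [c4 [c5 [c6 [b1 [b2 [b3 [b4 [b5 b6]]]]]]]]]]].
    assert (H : nle Omega (fsub (F (A1 s) (tau1 s) (fun x' y => A1 (s - tau1 s x') y))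
                                (F (A2 s) (tau2 s) (fun x' y => A2 (s - tau2 s x') y)))
                  (L * (D + D + (Lam * D + D)))).
    { apply HL; auto.
      - intros y Hy. apply HD; auto; lra.
      - intros y Hy. apply HDt; auto; lra.
      - intros x' y Hx' Hy. unfold fsub2.
        pose proof (proj2 (Ht1p s ltac:(lra)) x' Hx'). pose proof (proj2 (Ht2p s ltac:(lra)) x' Hx').
        pose proof (HK1 s ltac:(lra) x' Hx'). pose proof (HK2 s ltac:(lra) x' Hx').
        replace (A1 (s - tau1 s x') y - A2 (s - tau2 s x') y) with
          ((A1 (s - tau1 s x') y - A1 (s - tau2 s x') y) + (A1 (s - tau2 s x') y - A2 (s - tau2 s x') y)) by ring.
        eapply Rle_trans; [apply Rabs_triang|]. apply Rplus_le_compat.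
        + eapply Rle_trans; [apply HLam; auto; lra|]. apply Rmult_le_compat_l; auto.
          replace (s - tau1 s x' - (s - tau2 s x')) with (- (tau1 s x' - tau2 s x')) by ring.
          rewrite Rabs_Ropp. apply HDt; auto; lra.
        + apply HDall; auto; lra. }
    specialize (H x Hx). unfold fsub in H. eapply Rle_trans; [apply H|]. right; ring.
Qed.

Theorem lemma4p3 (n : nat) (Omega : subset n) (alpha : R) (F : Fop n)
    (f : (pt n -> R) -> (pt n -> R)) (Mf : R)
    (HOmega : compact_set Omega) (Halpha : 0 <= alpha)
    (HF : F_assumption Omega F) (Hf : f_assumption Omega f Mf)
    (M0 : R) (HM0 : 0 < M0) (phi : R -> pt n -> R) (tau0 : pt n -> R)
    (Hnorm : exists a b c, Lip_alpha_bounds Omega alpha phi a b /\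
               Cplus Omega tau0 /\ nle Omega tau0 c /\ a + b + c <= M0)
    (r : R) (Hr : 0 < r)
    (A1 tau1 A2 tau2 : R -> pt n -> R)
    (H1 : is_solution Omega F f phi tau0 r A1 tau1)
    (H2 : is_solution Omega F f phi tau0 r A2 tau2) :
  (forall t, t <= r -> forall x, Omega x -> A1 t x = A2 t x) /\
  (forall t, 0 <= t <= r -> forall x, Omega x -> tau1 t x = tau2 t x).
Proof.
  destruct Hnorm as [a [b [c [HLip _]]]].
  pose proof HF as [HFc HFL]. destruct Hf as [Hfc [[Lf HLf] [Hfpos Hfmono]]].
  pose proof H1 as [[HA1c HA1t] [[Ht1c Ht1t] [Ht1p [Hi1 _]]]].
  pose proof H2 as [[HA2c HA2t] [[Ht2c Ht2t] [Ht2p [Hi2 _]]]].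
  destruct (curve_bounded Omega tau1 0 r HOmega ltac:(lra) Ht1c Ht1t) as [K1 HK1].
  destruct (curve_bounded Omega tau2 0 r HOmega ltac:(lra) Ht2c Ht2t) as [K2 HK2].
  set (K := Rabs K1 + Rabs K2).
  assert (HK0 : 0 <= K) by (unfold K; pose proof (Rabs_pos K1); pose proof (Rabs_pos K2); lra).
  assert (HKt1 : forall s, 0 <= s <= r -> forall x, Omega x -> Rabs (tau1 s x) <= K).
  { intros s Hs x Hx. pose proof (HK1 s Hs x Hx). unfold K. pose proof (Rle_abs K1). pose proof (Rabs_pos K2). lra. }
  assert (HKt2 : forall s, 0 <= s <= r -> forall x, Omega x -> Rabs (tau2 s x) <= K).
  { intros s Hs x Hx. pose proof (HK2 s Hs x Hx). unfold K. pose proof (Rle_abs K2). pose proof (Rabs_pos K1). lra. }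
  assert (HKt1' : forall s, 0 <= s <= r -> forall x, Omega x -> tau1 s x <= K).
  { intros. pose proof (HKt1 s H x H0). pose proof (Rle_abs (tau1 s x)). lra. }
  assert (HKt2' : forall s, 0 <= s <= r -> forall x, Omega x -> tau2 s x <= K).
  { intros. pose proof (HKt2 s H x H0). pose proof (Rle_abs (tau2 s x)). lra. }
  destruct (curve_bounded Omega A1 (-K) r HOmega ltac:(lra)) as [MA1 HMA1].
  { intros t Ht; apply HA1c; lra. }
  { intros t Ht eps Heps. destruct (HA1t t ltac:(lra) eps Heps) as [d [Hd Hd2]].
    exists d; split; auto. intros s Hs. apply Hd2; lra. }
  destruct (curve_bounded Omega A2 (-K) r HOmega ltac:(lra)) as [MA2 HMA2].
  { intros t Ht; apply HA2c; lra. }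
  { intros t Ht eps Heps. destruct (HA2t t ltac:(lra) eps Heps) as [d [Hd Hd2]].
    exists d; split; auto. intros s Hs. apply Hd2; lra. }
  set (M := Rabs MA1 + Rabs MA2 + K + 1).
  assert (HM : 0 < M) by (unfold M; pose proof (Rabs_pos MA1); pose proof (Rabs_pos MA2); lra).
  assert (HM1 : forall s, -K <= s <= r -> nle Omega (A1 s) M).
  { intros s Hs x Hx. pose proof (HMA1 s Hs x Hx). unfold M. pose proof (Rle_abs MA1). pose proof (Rabs_pos MA2). lra. }
  assert (HM2 : forall s, -K <= s <= r -> nle Omega (A2 s) M).
  { intros s Hs x Hx. pose proof (HMA2 s Hs x Hx). unfold M. pose proof (Rle_abs MA2). pose proof (Rabs_pos MA1). lra. }
  assert (HMt1 : forall s, 0 <= s <= r -> nle Omega (tau1 s) M).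
  { intros s Hs x Hx. pose proof (HKt1 s Hs x Hx). unfold M. pose proof (Rabs_pos MA1). pose proof (Rabs_pos MA2). lra. }
  assert (HMt2 : forall s, 0 <= s <= r -> nle Omega (tau2 s) M).
  { intros s Hs x Hx. pose proof (HKt2 s Hs x Hx). unfold M. pose proof (Rabs_pos MA1). pose proof (Rabs_pos MA2). lra. }
  destruct (HFL M HM) as [L0 HL0].
  set (L := Rmax L0 0). assert (HLpos : 0 <= L) by apply Rmax_r.
  assert (HL : forall u v w u' v' w',
     Cfun Omega u -> Cfun Omega v -> Cfun2 Omega w ->
     Cfun Omega u' -> Cfun Omega v' -> Cfun2 Omega w' ->
     nle Omega u M -> nle Omega v M -> nle2 Omega w M ->
     nle Omega u' M -> nle Omega v' M -> nle2 Omega w' M ->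
     forall a b c, nle Omega (fsub u u') a -> nle Omega (fsub v v') b ->
       nle2 Omega (fsub2 w w') c ->
       nle Omega (fsub (F u v w) (F u' v' w')) (L * (a + b + c))).
  { intros. intros x Hx. pose proof (HL0 u v w u' v' w' H H0 H3 H4 H5 H6 H7 H8 H9 H10 H11 H12 a0 b0 c0 H13 H14 H15 x Hx).
    pose proof (Rabs_pos (fsub u u' x)). pose proof (H13 x Hx).
    pose proof (Rabs_pos (fsub v v' x)). pose proof (H14 x Hx).
    pose proof (Rabs_pos (fsub2 w w' x x)). pose proof (H15 x x Hx Hx).
    eapply Rle_trans; [apply H16|]. apply Rmult_le_compat_r; [lra|]. apply Rmax_l. }
  set (Lf' := Rmax Lf 0). assert (HLfpos : 0 <= Lf') by apply Rmax_r.
  assert (HLf' : forall u u', Cfun Omega u -> Cfun Omega u' ->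
     forall a, nle Omega (fsub u u') a -> nle Omega (fsub (f u) (f u')) (Lf' * a)).
  { intros u u' Hu Hu' a0 Ha0 x Hx. pose proof (HLf u u' Hu Hu' a0 Ha0 x Hx).
    pose proof (Rabs_pos (fsub u u' x)). pose proof (Ha0 x Hx).
    eapply Rle_trans; [apply H|]. apply Rmult_le_compat_r; [lra|]. apply Rmax_l. }
  assert (Hz1 : Cfun Omega (fun _ : pt n => 0)).
  { intros x Hx eps Heps. exists 1. split; [lra|]. intros. rewrite Rminus_diag, Rabs_R0; auto. }
  assert (Hz2 : Cfun2 Omega (fun _ _ : pt n => 0)).
  { intros x y Hx Hy eps Heps. exists 1. split; [lra|]. intros. rewrite Rminus_diag, Rabs_R0; auto. }
  destruct (cfun_bounded Omega _ HOmega (HFc _ _ _ Hz1 Hz1 Hz2)) as [B0 HB0].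
  assert (HFb : forall (A tau : R -> pt n -> R), is_solution Omega F f phi tau0 r A tau ->
     (forall s, -K <= s <= r -> nle Omega (A s) M) -> (forall s, 0 <= s <= r -> nle Omega (tau s) M) ->
     (forall s, 0 <= s <= r -> forall x, Omega x -> tau s x <= K) ->
     forall l, 0 <= l <= r -> forall y, Omega y ->
     Rabs (F (A l) (tau l) (fun x' y => A (l - tau l x') y) y) <= B0 + L * (M + M + M)).
  { intros A tau Hs HMA HMt HKt l Hl y Hy.
    pose proof Hs as [[HAc _] [_ [Htp _]]]. pose proof (Htp l Hl) as [Htc Htpos].
    assert (X : nle Omega (fsub (F (A l) (tau l) (fun x' y => A (l - tau l x') y))
                  (F (fun _ => 0) (fun _ => 0) (fun _ _ => 0))) (L * (M + M + M))).
    { apply HL; try assumption.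
      all: try (apply HAc; lra).
      all: try (apply (W_cont Omega r l); [apply Hs | auto | lra]).
      all: try (apply HMA; lra).
      all: try (apply HMt; lra).
      all: try (intros x' y' Hx' Hy'; pose proof (Htpos x' Hx'); pose proof (HKt l Hl x' Hx'); apply HMA; auto; lra).
      all: try (intros x _; rewrite Rabs_R0; lra).
      all: try (intros x y' _ _; rewrite Rabs_R0; lra).
      all: try (intros x Hx; unfold fsub; rewrite Rminus_0_r; apply HMA; auto; lra).
      all: try (intros x Hx; unfold fsub; rewrite Rminus_0_r; apply HMt; auto).
      all: try (intros x' y' Hx' Hy'; unfold fsub2; rewrite Rminus_0_r; pose proof (Htpos x' Hx');
        pose proof (HKt l Hl x' Hx'); apply HMA; auto; lra). }
    specialize (X y Hy). specialize (HB0 y Hy). unfold fsub in X.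
    pose proof (Rabs_triang_inv (F (A l) (tau l) (fun x' y => A (l - tau l x') y) y)
                                (F (fun _ => 0) (fun _ => 0) (fun _ _ => 0) y)). lra. }
  destruct (phi_lip Omega alpha phi a b K HLip Halpha HK0) as [Lp [HLp0 HLp]].
  pose proof (A_lip_pos Omega F f phi tau0 r A1 tau1 _ H1 (HFb A1 tau1 H1 HM1 HMt1 HKt1')) as HAp.
  pose proof (A_lip Omega F f phi tau0 r A1 tau1 _ Lp K H1 HLp0 HK0 Hr HAp HLp) as HLam.
  set (Lam := Rmax (B0 + L * (M + M + M)) 0 + Lp) in HLam.
  assert (HLam0 : 0 <= Lam) by (unfold Lam; pose proof (Rmax_r (B0 + L * (M + M + M)) 0); lra).
  assert (Hcst : Cfun Omega (fun _ : pt n => M)).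
  { intros x Hx eps Heps. exists 1. split; [lra|]. intros. rewrite Rminus_diag, Rabs_R0; auto. }
  destruct (cfun_pos_inf Omega (f (fun _ => M)) HOmega (Hfc _ Hcst)) as [m [Hm0 Hm]].
  { intros x Hx. apply (Hfpos _ Hcst x Hx). }
  assert (Hfm1 : forall s, -K <= s <= r -> forall x, Omega x -> m <= f (A1 s) x).
  { intros s Hs x Hx. eapply Rle_trans; [apply (Hm x Hx)|]. apply (Hfmono (A1 s) (fun _ => M)); auto.
    apply HA1c; lra. intros y Hy. pose proof (HM1 s Hs y Hy). pose proof (Rle_abs (A1 s y)). lra. }
  assert (Hfm2 : forall s, -K <= s <= r -> forall x, Omega x -> m <= f (A2 s) x).
  { intros s Hs x Hx. eapply Rle_trans; [apply (Hm x Hx)|]. apply (Hfmono (A2 s) (fun _ => M)); auto.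
    apply HA2c; lra. intros y Hy. pose proof (HM2 s Hs y Hy). pose proof (Rle_abs (A2 s y)). lra. }
  pose proof H1 as [_ [_ [_ [Hinit1 _]]]]. pose proof H2 as [_ [_ [_ [Hinit2 _]]]].
  assert (Hmain : forall s, 0 <= s <= r -> forall x, Omega x -> A1 s x = A2 s x /\ tau1 s x = tau2 s x).
  { apply (real_ind 0 r (fun s => forall x, Omega x -> A1 s x = A2 s x /\ tau1 s x = tau2 s x)); [lra|]. intros T HT IH.
    assert (Heq : forall s, s < T -> forall y, Omega y -> A1 s y = A2 s y).
    { intros s Hs y Hy. destruct (Rle_or_lt s 0).
      rewrite Hinit1, Hinit2; auto. apply (IH s); auto; lra. }
    assert (Heqt : forall s, 0 <= s < T -> forall y, Omega y -> tau1 s y = tau2 s y).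
    { intros s Hs y Hy. apply (IH s); auto. }
    set (c1 := L * (3 + Lam)). set (c2 := Lf' / m).
    assert (Hc1 : 0 <= c1) by (unfold c1; apply Rmult_le_pos; lra).
    assert (Hc2 : 0 <= c2) by (unfold c2; apply Rmult_le_pos; [lra| left; apply Rinv_0_lt_compat; lra]).
    set (h := / (2 * (1 + c1 + c2))).
    assert (Hh : 0 < h) by (unfold h; apply Rinv_0_lt_compat; lra).
    assert (Hh2 : h * (2 * (1 + c1 + c2)) = 1) by (unfold h; field; lra).
    assert (Hhc1 : c1 * h <= / 2) by nra.
    assert (Hhc2 : c2 * h <= / 2) by nra.
    set (t1 := Rmin (T + h) r).
    assert (Ht1 : T <= t1 <= r) by (unfold t1; split; [apply Rmin_glb; lra| apply Rmin_r]).
    assert (Ht1h : t1 <= T + h) by (unfold t1; apply Rmin_l).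
    set (P := fun D => (forall s, T <= s <= t1 -> forall y, Omega y -> Rabs (A1 s y - A2 s y) <= D) /\
                       (forall s, T <= s <= t1 -> forall y, Omega y -> Rabs (tau1 s y - tau2 s y) <= D)).
    assert (Hcontr : forall D, 0 <= D -> P D -> P (D / 2)).
    { intros D HD0 [HDA HDt]. split.
      - intros s Hs y Hy.
        pose proof (A_est Omega F HF f phi tau0 r A1 tau1 A2 tau2 M L Lam K T s D y HL H1 H2
          HLpos HD0 HLam0 HK0 HM1 HM2 HMt1 HMt2 HKt1' HKt2' HLam Heq Heqt) as X.
        assert (X' : Rabs (A1 s y - A2 s y) <= L * (3 + Lam) * D * (s - T)).
        { apply X; auto; try lra; intros; [apply HDA | apply HDt]; auto; lra. }
        fold c1 in X'. eapply Rle_trans; [apply X'|].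
        assert (c1 * D * (s - T) <= c1 * D * h).
        { apply Rmult_le_compat_l; [apply Rmult_le_pos|]; lra. }
        assert (c1 * h * D <= / 2 * D) by (apply Rmult_le_compat_r; lra). lra.
      - intros s Hs y Hy.
        assert (HDA' : forall s', T <= s' <= s -> forall y, Omega y -> Rabs (A1 s' y - A2 s' y) <= D).
        { intros; apply HDA; auto; lra. }
        assert (Hgoal : forall u, 0 <= u -> m * u <= Lf' * D * (s - T) -> u <= D / 2).
        { intros u Hu Hmu.
          assert (Lf' * D * (s - T) <= Lf' * D * h).
          { apply Rmult_le_compat_l; [apply Rmult_le_pos|]; lra. }
          assert (Hu2 : u <= c2 * h * D).
          { unfold c2. apply (Rmult_le_reg_l m); auto. field_simplify; [|lra]. nra. }
          assert (c2 * h * D <= / 2 * D) by (apply Rmult_le_compat_r; lra). lra. }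
        destruct (Rle_or_lt (tau2 s y) (tau1 s y)).
        + rewrite Rabs_right by lra. apply Hgoal; [lra|].
          apply (tau_est Omega F f Lf' phi tau0 r A1 tau1 A2 tau2 m K T s D y H1 H2 HLf' Hfm1 HKt1' Heq HDA'); auto; lra.
        + rewrite Rabs_minus_sym, Rabs_right by lra. apply Hgoal; [lra|].
          apply (tau_est Omega F f Lf' phi tau0 r A2 tau2 A1 tau1 m K T s D y H2 H1 HLf' Hfm2 HKt2'); auto; try lra.
          * intros; symmetry; apply Heq; auto.
          * intros; rewrite Rabs_minus_sym; apply HDA'; auto. }
    set (D0 := 2 * M).
    assert (HP0 : P D0).
    { split; intros s Hs y Hy.
      - pose proof (HM1 s ltac:(lra) y Hy). pose proof (HM2 s ltac:(lra) y Hy).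
        pose proof (Rabs_triang (A1 s y) (- A2 s y)). rewrite Rabs_Ropp in H3. unfold D0. unfold Rminus. lra.
      - pose proof (HMt1 s ltac:(lra) y Hy). pose proof (HMt2 s ltac:(lra) y Hy).
        pose proof (Rabs_triang (tau1 s y) (- tau2 s y)). rewrite Rabs_Ropp in H3. unfold D0. unfold Rminus. lra. }
    assert (HPk : forall k, P (D0 / 2 ^ k)).
    { induction k. simpl. replace (D0 / 1) with D0 by field. auto.
      replace (D0 / 2 ^ S k) with (D0 / 2 ^ k / 2) by (simpl; field; apply pow_nonzero; lra).
      apply Hcontr; auto. unfold Rdiv. apply Rmult_le_pos. unfold D0; lra.
      left; apply Rinv_0_lt_compat, pow_lt; lra. }
    exists h. split; auto. intros s Hs HsT x Hx.
    assert (Hst1 : s <= t1) by (unfold t1, Rmin; destruct (Rle_dec (T + h) r); lra).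
    split.
    - assert (A1 s x - A2 s x = 0); [|lra].
      apply (zero_of_halving _ D0). unfold D0; lra. intro k. apply (HPk k); auto; lra.
    - assert (tau1 s x - tau2 s x = 0); [|lra].
      apply (zero_of_halving _ D0). unfold D0; lra. intro k. apply (HPk k); auto; lra. }
  split.
  - intros t Ht x Hx. destruct (Rle_or_lt t 0).
    + rewrite Hinit1, Hinit2; auto.
    + apply Hmain; auto; lra.
  - intros t Ht x Hx. apply Hmain; auto.
Qed.
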